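(* If $X$ is a weakly Lindel\''of {\sf P}-space, then $X$ satisfies ${\sf S}_1(\mathcal{G}_K,\mathcal{G}_D)$.
   Context: All spaces are infinite ${\sf T}_1$ topological spaces. A {\sf P}-space is a space in which every intersection of countably many open sets is open. A space is weakly Lindel\''of if every open cover has a countable subfamily whose union is dense. $\mathcal{G}_K$ is the family of all collections $\mathcal{U}$ of ${\sf G}_\delta$ subsets of $X$ with $X\notin\mathcal{U}$ such that each compact subset of $X$ is contained in some member of $\mathcal{U}$. $\mathcal{G}_D$ is the family of collections of ${\sf G}_\delta$ subsets of $X$ whose union is dense in $X$. ${\sf S}_1(\mathcal{A},\mathcal{B})$: for each sequence $(A_n)$ of elements of $\mathcal{A}$ there are $B_n\in A_n$ with $\{B_n:n\in\mathbb{N}\}\in\mathcal{B}$. *)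

(* Defs.v *)
From Stdlib Require Import List.
Set Implicit Arguments.

Record topology (X : Type) : Type := Topology {
  open : (X -> Prop) -> Prop;
  open_full : open (fun _ => True);
  open_union : forall F : (X -> Prop) -> Prop,
      (forall U, F U -> open U) -> open (fun x => exists U, F U /\ U x);
  open_inter : forall U V, open U -> open V -> open (fun x => U x /\ V x)
}.

Section Top.
Variables (X : Type) (T : topology X).

Definition T1_space : Prop :=
  forall x y : X, x <> y -> exists U, open T U /\ U x /\ ~ U y.

Definition infinite_space : Prop :=
  ~ exists l : list X, forall x, In x l.

Definition dense (D : X -> Prop) : Prop :=
  forall U, open T U -> (exists x, U x) -> exists x, U x /\ D x.

Definition Gdelta (A : X -> Prop) : Prop :=
  exists U : nat -> X -> Prop, (forall n, open T (U n)) /\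
    forall x, A x <-> (forall n, U n x).

Definition P_space : Prop :=
  forall U : nat -> X -> Prop, (forall n, open T (U n)) ->
    open T (fun x => forall n, U n x).

Definition countable_family (S : (X -> Prop) -> Prop) : Prop :=
  exists g : (X -> Prop) -> nat,
    forall A B, S A -> S B -> g A = g B -> A = B.

Definition weakly_Lindelof : Prop :=
  forall C : (X -> Prop) -> Prop,
    (forall U, C U -> open T U) -> (forall x, exists U, C U /\ U x) ->
    exists S : (X -> Prop) -> Prop,
      (forall U, S U -> C U) /\ countable_family S /\
      dense (fun x => exists U, S U /\ U x).

Definition compact (K : X -> Prop) : Prop :=
  forall C : (X -> Prop) -> Prop,
    (forall U, C U -> open T U) -> (forall x, K x -> exists U, C U /\ U x) ->
    exists l : list (X -> Prop), (forall U, In U l -> C U) /\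
      forall x, K x -> exists U, In U l /\ U x.

Definition G_K (U : (X -> Prop) -> Prop) : Prop :=
  (forall A, U A -> Gdelta A) /\
  ~ (exists A, U A /\ forall x, A x) /\
  (forall K, compact K -> exists A, U A /\ forall x, K x -> A x).

Definition G_D (U : (X -> Prop) -> Prop) : Prop :=
  (forall A, U A -> Gdelta A) /\ dense (fun x => exists A, U A /\ A x).

End Top.

Definition S1 (X : Type) (A B : ((X -> Prop) -> Prop) -> Prop) : Prop :=
  forall s : nat -> (X -> Prop) -> Prop, (forall n, A (s n)) ->
    exists b : nat -> X -> Prop, (forall n, s n (b n)) /\
      B (fun V => exists n, V = b n).

(* Main.v *)
Require Import Defs.
From Stdlib Require Import List ClassicalEpsilon FunctionalExtensionality PropExtensionality.

Theorem lemma5p27 (X : Type) (T : topology X)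
  (hT1 : T1_space T) (hinf : infinite_space X)
  (hP : P_space T) (hwL : weakly_Lindelof T) :
  S1 (G_K T) (G_D T).
Proof.
  intros s hs.
  assert (x0 : inhabited X).
  { destruct (classic (inhabited X)) as [h|h]; [exact h|].
    exfalso; apply hinf; exists nil; intros x; apply h; constructor; exact x. }
  assert (GO : forall A, Gdelta T A -> open T A).
  { intros A [U [HU HA]].
    replace A with (fun x => forall n, U n x).
    - apply hP; exact HU.
    - apply functional_extensionality; intro x; apply propositional_extensionality;
      split; apply HA. }
  assert (Hcov : forall n x, exists A, s n A /\ A x).
  { intros n x. destruct (hs n) as [HG [_ HK]].
    destruct (HK (fun y => y = x)) as [A [HA HAx]].
    - intros C _ HC. destruct (HC x eq_refl) as [U [HCU HUx]].
      exists (U :: nil). split.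
      + intros V [<-|[]]; exact HCU.
      + intros y ->. exists U; split; [left; reflexivity| exact HUx].
    - exists A; split; [exact HA| apply HAx; reflexivity]. }
  set (V := fun n x => epsilon (inhabits (fun _ : X => True))
                        (fun A => s n A /\ A x)).
  assert (HV : forall n x, s n (V n x) /\ V n x x).
  { intros n x. unfold V. apply epsilon_spec. apply Hcov. }
  set (W := fun y x => forall n, V n y x).
  destruct (hwL (fun O => exists y, O = W y)) as [S [HSC [[g Hg] HD]]].
  - intros O [y ->]. apply hP. intro n. apply GO.
    destruct (hs n) as [HG _]. apply HG. apply HV.
  - intros x. exists (W x). split; [exists x; reflexivity|]. intro n; apply HV.
  - set (yn := fun n => epsilon x0 (fun y => S (W y) /\ g (W y) = n)).
    exists (fun n => V n (yn n)). split.
    + intro n; apply HV.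
    + split.
      * intros A [n ->]. destruct (hs n) as [HG _]. apply HG. apply HV.
      * intros O HO Hne. destruct (HD O HO Hne) as [x [HOx [A [HSA HAx]]]].
        exists x. split; [exact HOx|].
        exists (V (g A) (yn (g A))). split; [exists (g A); reflexivity|].
        destruct (HSC A HSA) as [y0 Hy0].
        assert (Hs : S (W (yn (g A))) /\ g (W (yn (g A))) = g A).
        { unfold yn. apply epsilon_spec. exists y0. subst A. split; auto. }
        destruct Hs as [Hs1 Hs2].
        assert (E : W (yn (g A)) = A) by (apply Hg; auto).
        rewrite <- E in HAx. apply HAx.
Qed.
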